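(* Let $\mathbb F$ be a field and $f(x)$ a nonzero polynomial in $\mathbb F[x]$. Then $d(f(x))=|(\mathbb F[x])'/P_{J([f(x)]_\sim)}|$, where $(\mathbb F[x])'=\mathbb F[x]_{mult}/\sim$.
   Context: $\mathbb F[x]_{mult}$ is the multiplicative semigroup of $\mathbb F[x]$; $\sim$ is the associate relation, a congruence on it; $[g]_\sim$ is the $\sim$-class of $g$. $J([f(x)]_\sim)$ is the ideal of the semigroup $(\mathbb F[x])'$ generated by $[f(x)]_\sim$. For a semigroup $S$, $H\subseteq S$, $a\in S$: $H\dots a=\{(u,v)\in S\times S: uav\in H\}$ and $P_H=\{(a,b)\in S\times S: H\dots a=H\dots b\}$. $d(f(x))$ is the number of pairwise non-associated divisors of $f(x)$ in $\mathbb F[x]$. *)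

(* Defs.v *)
From HB Require Import structures.
From mathcomp Require Import all_boot all_algebra generic_quotient.
Set Implicit Arguments. Unset Strict Implicit. Unset Printing Implicit Defensive.
Import GRing.Theory.
Local Open Scope ring_scope.

Section Semigroup.
Variables (T : Type) (mul : T -> T -> T).

(* J(a): the (two-sided) ideal of the semigroup generated by a, i.e. S^1 a S^1 *)
Definition sg_ideal_gen (a : T) : T -> Prop :=
  fun x => x = a \/ (exists u, x = mul u a) \/ (exists v, x = mul a v)
           \/ (exists u v, x = mul (mul u a) v).

Definition sg_dots (H : T -> Prop) (a : T) : T * T -> Prop :=
  fun uv => H (mul (mul uv.1 a) uv.2).

Definition sg_P (H : T -> Prop) (a b : T) : Prop := sg_dots H a = sg_dots H b.
End Semigroup.

Definition quot_card (T : Type) (R : T -> T -> Prop) (n : nat) : Prop :=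
  exists g : 'I_n -> T,
    (forall i j, R (g i) (g j) -> i = j) /\ (forall x, exists i, R x (g i)).

Section PolyAssoc.
Variable F : fieldType.

Definition assoc_rel : equiv_rel {poly F} :=
  EquivRel (@eqp F) (@eqpxx F) (@eqp_sym F) (@eqp_trans F).

Definition polyS := {eq_quot assoc_rel}%qT.

(* multiplication induced on classes (~ is a congruence) *)
Definition polyS_mul (x y : polyS) : polyS :=
  \pi_(polyS)%qT (repr x * repr y).

Definition cls (g : {poly F}) : polyS := \pi_(polyS)%qT g.

Definition num_nonassoc_divisors (f : {poly F}) (n : nat) : Prop :=
  exists g : 'I_n -> {poly F},
    (forall i, g i %| f) /\ (forall i j, g i %= g j -> i = j) /\
    (forall p, p %| f -> exists i, p %= g i).
End PolyAssoc.

(* Main.v *)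
Require Import Defs.
From HB Require Import structures.
From mathcomp Require Import all_boot all_algebra generic_quotient zify.
From Stdlib Require Import FunctionalExtensionality PropExtensionality Classical.
Import GRing.Theory.
Local Open Scope ring_scope.

Section S.
Variable F : fieldType.
Implicit Types p q : {poly F}.

Lemma clsE p q : cls p = cls q <-> p %= q.
Proof.
split.
- move=> h. apply/(@eqquotP _ _ (polyS F)). exact: h.
- move=> h. by apply/eqquotP.
Qed.

Lemma repr_cls p : repr (cls p) %= p.
Proof. apply/clsE. by rewrite /cls reprK. Qed.

Lemma cls_repr (x : polyS F) : cls (repr x) = x.
Proof. by rewrite /cls reprK. Qed.

Lemma repr_mul (x y : polyS F) : repr (polyS_mul x y) %= repr x * repr y.
Proof. exact: repr_cls. Qed.

Lemma H_iff (f : {poly F}) (x : polyS F) :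
  sg_ideal_gen (@polyS_mul F) (cls f) x <-> f %| repr x.
Proof.
split.
- rewrite /sg_ideal_gen; case=> [->|[[u ->]|[[v ->]|[u [v ->]]]]].
  + by rewrite (eqp_dvdr _ (repr_cls _)).
  + rewrite (eqp_dvdr _ (repr_mul _ _)) (eqp_dvdr _ (eqp_mull _ (repr_cls _))).
    exact: dvdp_mull.
  + rewrite (eqp_dvdr _ (repr_mul _ _)) (eqp_dvdr _ (eqp_mulr _ (repr_cls _))).
    exact: dvdp_mulr.
  + rewrite (eqp_dvdr _ (repr_mul _ _)) (eqp_dvdr _ (eqp_mulr _ (repr_mul _ _))).
    rewrite (eqp_dvdr _ (eqp_mulr _ (eqp_mull _ (repr_cls _)))).
    by apply: dvdp_mulr; apply: dvdp_mull.
- move=> h. right; left. exists (cls (repr x %/ f)).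
  rewrite -[x]cls_repr. apply/clsE.
  rewrite cls_repr eqp_sym.
  apply: (eqp_trans (eqp_mulr _ (repr_cls _))).
  apply: (eqp_trans (eqp_mull _ (repr_cls _))).
  by rewrite divpK // eqpxx.
Qed.

Definition DV (f p q : {poly F}) := forall w, (f %| w * p) = (f %| w * q).

Lemma P_iff (f : {poly F}) (a b : polyS F) :
  sg_P (@polyS_mul F) (sg_ideal_gen (@polyS_mul F) (cls f)) a b <-> DV f (repr a) (repr b).
Proof.
have key : forall u c v, sg_dots (@polyS_mul F) (sg_ideal_gen (@polyS_mul F) (cls f)) c (u, v)
     <-> f %| (repr u * repr v) * repr c.
  move=> u c v; rewrite /sg_dots /= H_iff.
  rewrite (eqp_dvdr _ (repr_mul _ _)) (eqp_dvdr _ (eqp_mulr _ (repr_mul _ _))).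
  by rewrite mulrAC.
split.
- move=> h w.
  have := key (cls w) a (cls 1); rewrite h key => e.
  have E : forall c, (repr (cls w) * repr (cls (1 : {poly F}))) * c %= w * c.
    move=> c; apply: eqp_mulr. apply: (eqp_trans (eqp_mull _ (repr_cls _))).
    by rewrite mulr1 repr_cls.
  rewrite -(eqp_dvdr _ (E (repr a))) -(eqp_dvdr _ (E (repr b))).
  by apply/idP/idP => /e.
- move=> h. rewrite /sg_P. apply: functional_extensionality => [[u v]].
  apply: propositional_extensionality.
  by rewrite !key h.
Qed.

Lemma irr_div (f : {poly F}) : f != 0 -> (1 < size f)%N ->
  exists p, irreducible_poly p /\ p %| f.
Proof.
move: {2}(size f) (leqnn (size f)) => n; elim: n f => [|n IH] f.
  by rewrite leqn0 => /eqP ->.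
move=> hs f0 f1.
case: (Classical_Prop.classic (irreducible_poly f)) => Hi; first by exists f; split.
have [q [q1 [qf nqf]]] : exists q, size q != 1%N /\ q %| f /\ ~~ (q %= f).
  apply: Classical_Prop.NNPP => N; apply: Hi; split => // q q1 qf.
  apply: Classical_Prop.NNPP => nq; apply: N; exists q; split => //; split => //.
  by apply/negP.
have q0 : q != 0 by apply: contraNneq f0 => q0; move: qf; rewrite q0 dvd0p.
have qs : (size q < size f)%N.
  rewrite ltn_neqAle dvdp_leq // andbT dvdp_size_eqp //.
have q1' : (1 < size q)%N.
  by rewrite ltn_neqAle eq_sym q1 /= size_poly_gt0.
have [p [ip pq]] := IH q (leq_trans qs hs) q0 q1'.
by exists p; split => //; apply: dvdp_trans qf.
Qed.

Lemma cover (f : {poly F}) : f != 0 ->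
  exists s : seq {poly F}, (forall x, x \in s -> x %| f) /\
    (forall e, e %| f -> exists2 x, x \in s & e %= x).
Proof.
move: {2}(size f) (leqnn (size f)) => n; elim: n f => [|n IH] f.
  by rewrite leqn0 size_poly_eq0 => /eqP -> ; rewrite eqxx.
move=> hs f0.
have [f1|f1] := leqP (size f) 1%N.
  have sf : size f = 1%N.
    by have := size_poly_gt0 f; rewrite f0; lia.
  exists [:: f]; split; first by move=> x; rewrite inE => /eqP ->.
  move=> e ef; exists f; rewrite ?inE //.
  have e0 : e != 0 by apply: contraNneq f0 => e0; move: ef; rewrite e0 dvd0p.
  have se : size e = 1%N.
    by have := size_poly_gt0 e; have := dvdp_leq f0 ef; rewrite e0 sf; lia.
  have : e %= 1 by rewrite -size_poly_eq1 se.
  have : f %= 1 by rewrite -size_poly_eq1 sf.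
  by rewrite eqp_sym => h1 h2; apply: eqp_trans h2 h1.
have [p [ip pf]] := @irr_div f f0 f1.
set g := f %/ p.
have fE : f = g * p by rewrite divpK.
have p0 : p != 0 := irredp_neq0 ip.
have g0 : g != 0 by apply: contraNneq f0 => g0; rewrite fE g0 mul0r.
have gs : (size g < size f)%N.
  have hg : (0 < size g)%N by rewrite size_poly_gt0.
  have := ip.1; rewrite fE size_mul //; move=> h; rewrite -subn1 -addnBA; last exact: ltnW.
  by rewrite -[X in (X < _)%N]addn0 ltn_add2l subn_gt0.
have [s [sd sc]] := IH g (leq_trans gs hs) g0.
exists (s ++ map (fun x => x * p) s); split.
  move=> x; rewrite mem_cat => /orP [xs|/mapP [y ys ->]].
    by rewrite fE; apply: dvdp_mulr; apply: sd.
  by rewrite fE dvdp_mul2r //; apply: sd.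
move=> e ef.
have [c1|c1] := eqVneq (size (gcdp p e)) 1%N.
  have cp : coprimep e p by rewrite coprimep_sym /coprimep c1.
  have eg : e %| g by rewrite -(Gauss_dvdpl _ cp) -fE.
  have [x xs ex] := sc e eg; exists x => //; by rewrite mem_cat xs.
have cp : gcdp p e %= p := ip _ c1 (dvdp_gcdl _ _).
have pe : p %| e by rewrite -(eqp_dvdl _ cp) dvdp_gcdr.
have eE : e = e %/ p * p by rewrite divpK.
have eg : e %/ p %| g by rewrite -(dvdp_mul2r _ _ p0) -eE -fE.
have [x xs ex] := sc _ eg; exists (x * p).
  by rewrite mem_cat; apply/orP; right; apply/mapP; exists x.
by rewrite eE; apply: eqp_mulr.
Qed.

Lemma DV_sym f p q : DV f p q -> DV f q p.
Proof. by move=> h w; rewrite h. Qed.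

Lemma DV_eqp f p p' q : p %= p' -> DV f p q -> DV f p' q.
Proof. by move=> e h w; rewrite -h; apply: eqp_dvdr; apply: eqp_mull; rewrite eqp_sym. Qed.

Lemma DV_gcd f p : DV f p (gcdp f p).
Proof.
move=> w; apply/idP/idP => h.
  have : f %| gcdp (w * f) (w * p) by rewrite dvdp_gcd h dvdp_mull.
  by rewrite -(eqp_dvdr _ (mulp_gcdr _ _ _)).
by apply: dvdp_trans h _; apply: dvdp_mul (dvdpp w) (dvdp_gcdr f p).
Qed.

Lemma DV_div f d e : f != 0 -> d %| f -> e %| f -> DV f d e -> d %= e.
Proof.
have one : forall d e, f != 0 -> d %| f -> DV f d e -> d %| e.
  move=> d' e' f0 df h.
  have q0 : f %/ d' != 0.
    apply: contraNneq f0 => q0; by rewrite -(divpK df) q0 mul0r.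
  have key : f %| (f %/ d') * e' by rewrite -h divpK.
  by move: key; rewrite -{1}(divpK df) dvdp_mul2l.
move=> f0 df ef h; rewrite /eqp (one d e) //.
by apply: one => //; apply: DV_sym.
Qed.
End S.
Arguments clsE {F}. Arguments repr_cls {F}. Arguments cls_repr {F}. Arguments repr_mul {F}.
Arguments P_iff {F}. Arguments cover {F}. Arguments DV_gcd {F}. Arguments DV_div {F}. Arguments DV {F}.

Theorem theorem5 (F : fieldType) (f : {poly F}) (hf : f != 0) :
  exists n : nat,
    num_nonassoc_divisors f n /\
    quot_card (sg_P (@polyS_mul F) (sg_ideal_gen (@polyS_mul F) (cls f))) n.
Proof.
have [s [sd sc]] := cover f hf.
set t := undup (map (@cls F) s).
have tu : uniq t := undup_uniq _.
have tP : forall i : 'I_(size t), exists2 y, y \in s & nth (cls 0) t i = cls y.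
  move=> i; have : nth (cls 0) t i \in t by apply: mem_nth.
  by rewrite mem_undup => /mapP [y ys ->]; exists y.
have tI : forall i j : 'I_(size t), nth (cls 0) t i = nth (cls 0) t j -> i = j.
  move=> i j e; apply: val_inj => /=; apply/eqP.
  by rewrite -(nth_uniq (cls 0) (ltn_ord i) (ltn_ord j) tu) e.
have tC : forall y, y \in s -> exists i : 'I_(size t), nth (cls 0) t i = cls y.
  move=> y ys; have yt : cls y \in t by rewrite mem_undup; apply: map_f.
  have hi : (index (cls y) t < size t)%N by rewrite index_mem.
  by exists (Ordinal hi); rewrite nth_index.
exists (size t); split.
- exists (fun i => repr (nth (cls 0) t i)); split; [|split].
  + move=> i; have [y ys ->] := tP i.
    by rewrite (eqp_dvdl _ (repr_cls _)); apply: sd.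
  + move=> i j e; apply: tI.
    by rewrite -(cls_repr (nth _ t i)) -(cls_repr (nth _ t j)); apply/clsE.
  + move=> p pf; have [y ys py] := sc p pf; have [i ei] := tC y ys.
    by exists i; rewrite ei; apply: (eqp_trans py); rewrite eqp_sym repr_cls.
- exists (fun i => nth (cls 0) t i); split.
  + move=> i j /P_iff h; apply: tI.
    rewrite -(cls_repr (nth _ t i)) -(cls_repr (nth _ t j)); apply/clsE.
    apply: DV_div h.
    * exact: hf.
    * by have [y ys ->] := tP i; rewrite (eqp_dvdl _ (repr_cls _)); apply: sd.
    * by have [y ys ->] := tP j; rewrite (eqp_dvdl _ (repr_cls _)); apply: sd.
  + move=> x.
    have [y ys cy] := sc (gcdp f (repr x)) (dvdp_gcdl _ _).
    have [i ei] := tC y ys; exists i; apply/P_iff; rewrite ei.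
    move=> w; rewrite (DV_gcd f (repr x) w).
    apply: eqp_dvdr; apply: eqp_mull.
    by apply: (eqp_trans cy); rewrite eqp_sym repr_cls.
Qed.
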